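(* For every instance of problem MR, the makespan $\max_{j\in\mathcal J}C_j$ of any optimal schedule is at most $$t_{\max}=\frac{w_{\max}}{w_{\min}}\left(n\,r_{\max}+n(n+1)\left(\frac{|\mathcal T|\cdot v_{\max}^{\beta}}{E}\right)^{\frac{1}{\beta-1}}\right).$$
   Context: Problem MR. There are jobs $\mathcal J=\{1,\dots,n\}$ and processors $\mathcal P=\{1,\dots,m\}$. Job $j$ has weight $w_j>0$, release date $r_j\ge0$, and a nonempty set of Map tasks and a nonempty set of Reduce tasks, preassigned to processors with at most one task of each job per processor; $T_{i,j}$ is the task of job $j$ on processor $i$, with work $v_{i,j}\ge0$; $\mathcal T$ is the set of all tasks and $|\mathcal T|$ its cardinality. A schedule gives each task a start time and a constant speed $s_{i,j}>0$; the task runs non-preemptively for $v_{i,j}/s_{i,j}$ time units and uses energy $v_{i,j}s_{i,j}^{\beta-1}$, where $\beta>1$ is a fixed constant. Feasibility: each processor runs at most one task at a time; tasks of job $j$ start no earlier than $r_j$; Reduce tasks of job $j$ start only after all Map tasks of job $j$ complete; total energy at most a given budget $E>0$. $C_j$ is the maximum completion time of the tasks of job $j$; the objective is to minimize $\sum_j w_jC_j$. $w_{\min}=\min_j w_j$, $w_{\max}=\max_j w_j$, $r_{\max}=\max_j r_j$, $v_{\max}=\max_{i,j}v_{i,j}$. *)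

(* Defs.v *)
From mathcomp Require Import all_boot all_order all_algebra.
From mathcomp Require Import reals exp.
Set Implicit Arguments. Unset Strict Implicit. Unset Printing Implicit Defensive.
Import Order.TTheory GRing.Theory Num.Theory.
Local Open Scope ring_scope.

(* Jobs are 'I_n, processors are 'I_m.
   kind i j = None      : job j has no task on processor i
   kind i j = Some true : T_{i,j} is a Map task
   kind i j = Some false: T_{i,j} is a Reduce task
   (so at most one task of each job per processor).
   A schedule is a pair (S, s) of start times and speeds. *)

Section MR.
Variable R : realType.
Variables n m : nat.
Variable kind : 'I_m -> 'I_n -> option bool.
Variable v : 'I_m -> 'I_n -> R.
Variable w : 'I_n -> R.
Variable r : 'I_n -> R.
Variable beta : R.
Variable E : R.

Definition is_task (i : 'I_m) (j : 'I_n) : bool := kind i j != None.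
Definition is_map (i : 'I_m) (j : 'I_n) : bool := kind i j == Some true.
Definition is_reduce (i : 'I_m) (j : 'I_n) : bool := kind i j == Some false.

Definition completion (S s : 'I_m -> 'I_n -> R) i j : R := S i j + v i j / s i j.

Definition energy (s : 'I_m -> 'I_n -> R) : R :=
  \sum_(ij : 'I_m * 'I_n | is_task ij.1 ij.2) v ij.1 ij.2 * s ij.1 ij.2 `^ (beta - 1).

Definition feasible (S s : 'I_m -> 'I_n -> R) : Prop :=
  [/\ (forall i j, is_task i j -> 0 < s i j),
      (forall i j, is_task i j -> r j <= S i j),
      (forall i j j', j != j' -> is_task i j -> is_task i j' ->
         ~ (exists t, [/\ S i j <= t, t < completion S s i j,
                         S i j' <= t & t < completion S s i j'])),
      (forall i i' j, is_reduce i j -> is_map i' j -> completion S s i' j <= S i j)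
    & energy s <= E].

(* C_j : maximum completion time of the tasks of job j (all completion times
   of a feasible schedule are >= 0, and every job has a task, so 0 is a
   harmless identity element for the max). *)
Definition Cj (S s : 'I_m -> 'I_n -> R) (j : 'I_n) : R :=
  \big[Num.max/0]_(i | is_task i j) completion S s i j.

Definition objective (S s : 'I_m -> 'I_n -> R) : R := \sum_j w j * Cj S s j.

Definition optimal (S s : 'I_m -> 'I_n -> R) : Prop :=
  feasible S s /\ forall S' s', feasible S' s' -> objective S s <= objective S' s'.

Definition makespan (S s : 'I_m -> 'I_n -> R) : R := \big[Num.max/0]_j Cj S s j.

Definition w_max : R := \big[Num.max/0]_j w j.           (* w > 0 *)
Definition w_min : R := \big[Num.min/w_max]_j w j.       (* n > 0 *)
Definition r_max : R := \big[Num.max/0]_j r j.           (* r >= 0 *)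
Definition v_max : R :=                                  (* v >= 0 *)
  \big[Num.max/0]_(ij : 'I_m * 'I_n | is_task ij.1 ij.2) v ij.1 ij.2.
Definition num_tasks : nat := #|[set ij : 'I_m * 'I_n | is_task ij.1 ij.2]|.

Definition t_max : R :=
  w_max / w_min *
  (n%:R * r_max + n%:R * (n%:R + 1) *
     ((num_tasks%:R * v_max `^ beta / E) `^ (1 / (beta - 1)))).

End MR.

(* Main.v *)
Require Import Defs.
From mathcomp Require Import all_boot all_order all_algebra.
From mathcomp Require Import reals exp.
From mathcomp Require Import ring lra zify.
Import Order.TTheory GRing.Theory Num.Theory.
Local Open Scope ring_scope.

Lemma sum_lin (R : realType) (a D : R) k :
  \sum_(0 <= j < k) (a + (2 * j + 2)%:R * D) = k%:R * a + k%:R * (k%:R + 1) * D.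
Proof.
elim: k => [|k IH]; first by rewrite big_nil; lra.
rewrite big_nat_recr //= IH -addn1 !natrD -[k.+1]addn1 natrD; lra.
Qed.

Lemma powR_div_eq (R : realType) (x y c : R) : 0 <= x -> 0 < y ->
  (x / y) `^ c = x `^ c / y `^ c.
Proof.
move=> hx hy; rewrite powRM //; last by rewrite invr_ge0 ltW.
by rewrite -powR_inv1 ?(ltW hy) // -powRrM mulN1r powRN.
Qed.

Lemma neq_aux (a b : nat) (x y : bool) : a != b -> (2 * a + x != 2 * b + y)%N.
Proof. by case: x; case: y => /=; lia. Qed.

Lemma nat_aux (a : nat) (b : bool) : ((2 * a + b).+1 <= 2 * a + 2)%N.
Proof. by case: b; lia. Qed.

Theorem proposition1 (R : realType) (n m : nat)
  (kind : 'I_m -> 'I_n -> option bool) (v : 'I_m -> 'I_n -> R)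
  (w : 'I_n -> R) (r : 'I_n -> R) (beta E : R) :
  (0 < n)%N -> 1 < beta -> 0 < E ->
  (forall j, 0 < w j) -> (forall j, 0 <= r j) ->
  (forall i j, is_task kind i j -> 0 <= v i j) ->
  (forall j, exists i, is_map kind i j) ->
  (forall j, exists i, is_reduce kind i j) ->
  forall S s : 'I_m -> 'I_n -> R,
    optimal kind v w r beta E S s ->
    makespan kind v S s <= t_max kind v w r beta E.
Proof.
move=> n0 b1 E0 wpos r0 v0 _ _ S s [fs opt].
set wmax := w_max w; set wmin := w_min w; set rmax := r_max r.
set vmax := v_max kind v; set N := num_tasks kind.
set Q := N%:R * vmax `^ beta / E.
set D := Q `^ (1 / (beta - 1)).
have hwmax j : w j <= wmax by apply: le_bigmax.
have hwmin j : wmin <= w j by apply: bigmin_le.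
have wmax0 : 0 < wmax by apply: lt_le_trans (wpos (Ordinal n0)) (hwmax _).
have wmin0 : 0 < wmin.
  rewrite /wmin /w_min; elim/big_ind: _ => // x y hx hy.
  by rewrite lt_min hx hy.
have hrmax j : r j <= rmax by apply: le_bigmax.
have rmax0 : 0 <= rmax by apply: bigmax_ge_id.
have hvmax i j : is_task kind i j -> v i j <= vmax.
  by move=> h; apply: (le_bigmax_cond 0 (fun ij : _ * _ => v ij.1 ij.2) (j:=(i,j))).
have vmax0 : 0 <= vmax by apply: bigmax_ge_id.
have D0 : 0 <= D by apply: powR_ge0.
have N0 : 0 < vmax -> (0 < N)%N.
  move=> hv; rewrite lt0n; apply/negP => /eqP hN.
  have : vmax <= 0.
    apply: bigmax_le => // ij hij; exfalso.
    have : ij \in [set ij : 'I_m * 'I_n | is_task kind ij.1 ij.2] by rewrite inE.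
    by move/eqP: hN; rewrite cards_eq0 => /eqP ->; rewrite inE.
  by rewrite leNgt hv.
pose sigma := if 0 < vmax then vmax / D else 1.
have Dpos : 0 < vmax -> 0 < D.
  move=> hv; apply: powR_gt0; rewrite /Q divr_gt0 // mulr_gt0 ?powR_gt0 //.
  by rewrite ltr0n N0.
have sig0 : 0 < sigma.
  rewrite /sigma; case: ifP => // hv; by rewrite divr_gt0 ?Dpos.
have dur i j : is_task kind i j -> 0 <= v i j / sigma <= D.
  move=> h; rewrite divr_ge0 ?v0 ?(ltW sig0) //=.
  rewrite /sigma; case: ifP => hv.
    rewrite invf_div mulrA ler_pdivrMr // [v i j * D]mulrC ler_wpM2l //; exact: hvmax.
  have -> : v i j = 0 by apply/eqP; rewrite eq_le v0 // andbT (le_trans (hvmax _ _ h)) // leNgt hv.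
  by rewrite mul0r.
pose S' := fun (i : 'I_m) (j : 'I_n) => rmax + (2 * j + is_reduce kind i j)%:R * D.
pose s' := fun (_ : 'I_m) (_ : 'I_n) => sigma.
have comp i j : is_task kind i j -> S' i j <= completion v S' s' i j <= S' i j + D.
  move=> h; have := dur i j h; rewrite /completion /s' => /andP [d1 d2].
  by rewrite lerDl d1 lerD2l d2.
have tm i j : is_map kind i j -> is_task kind i j.
  by rewrite /is_map /is_task => /eqP ->.
have tr i j : is_reduce kind i j -> is_task kind i j.
  by rewrite /is_reduce /is_task => /eqP ->.
have feas : feasible kind v r beta E S' s'.
  split.
  - by move=> *; exact: sig0.
  - move=> i j _; have := hrmax j.
    have : 0 <= (2 * j + is_reduce kind i j)%:R * D by rewrite mulr_ge0.
    rewrite /S'; lra.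
  - move=> i j j' hjj hi hi' [t [h1 h2 h3 h4]].
    have := comp i j hi; have := comp i j' hi'; move=> /andP[c1 c2] /andP[c3 c4].
    have e : S' i j = rmax + (2 * j + is_reduce kind i j)%:R * D by [].
    have e' : S' i j' = rmax + (2 * j' + is_reduce kind i j')%:R * D by [].
    move: e e'.
    set p := (2 * j + is_reduce kind i j)%N; set p' := (2 * j' + is_reduce kind i j')%N.
    move=> e e'.
    have hjj' : (j : nat) != j' by apply: contra hjj => /eqP h; apply/eqP; apply: val_inj.
    have hp : p != p'.
      by rewrite /p /p'; apply: neq_aux.
    rewrite neq_ltn in hp; case/orP: hp => hlt.
      have : p%:R * D + D <= p'%:R * D.
        by rewrite -[X in _ + X]mul1r -mulrDl ler_wpM2r // natr1 ler_nat.
      lra.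
    have : p'%:R * D + D <= p%:R * D.
      by rewrite -[X in _ + X]mul1r -mulrDl ler_wpM2r // natr1 ler_nat.
    lra.
  - move=> i i' j hr hm.
    have hnr : is_reduce kind i' j = false.
      by move: hm hr; rewrite /is_map /is_reduce => /eqP ->.
    have := comp i' j (tm _ _ hm); move=> /andP[c1 c2].
    have e1 : S' i' j = rmax + (2 * j)%:R * D by rewrite /S' hnr addn0.
    have e2 : S' i j = rmax + (2 * j)%:R * D + D.
      by rewrite /S' hr addn1 -natr1 mulrDl mul1r addrA.
    lra.
  - rewrite /energy /s'.
    have hsum c : \sum_(ij : 'I_m * 'I_n | is_task kind ij.1 ij.2) c = N%:R * c.
      rewrite (eq_bigl (fun ij => ij \in [set ij : 'I_m * 'I_n | is_task kind ij.1 ij.2])); last first.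
        by move=> ij; rewrite inE.
      by rewrite sumr_const mulr_natl.
    apply: le_trans (_ : \sum_(ij | is_task kind ij.1 ij.2) vmax * sigma `^ (beta - 1) <= _).
      apply: ler_sum => ij h; rewrite ler_wpM2r ?powR_ge0 //; exact: hvmax.
    rewrite hsum; case: (ltrP 0 vmax) => hv; last first.
      have -> : vmax = 0 by apply/le_anti; rewrite hv vmax0.
      by rewrite mul0r mulr0 ltW.
    have Dp := Dpos hv.
    rewrite /sigma hv powR_div_eq ?(ltW hv) //.
    rewrite /D -powRrM mul1r mulVf ?powRr1; last 2 first.
    + by rewrite /Q divr_ge0 ?(ltW E0) // mulr_ge0 ?powR_ge0.
    + by rewrite subr_eq0 gt_eqF.
    rewrite /Q.
    have -> : vmax `^ beta = vmax `^ (beta - 1) * vmax.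
      have -> : beta = (beta - 1) + 1 by rewrite subrK.
      rewrite powRD; last by rewrite (gt_eqF hv) implybT.
      by rewrite addrK powRr1 // ltW.
    have a0 : 0 < vmax `^ (beta - 1) by apply: powR_gt0.
    have Np : (0 < N%:R :> R) by rewrite ltr0n N0.
    have -> : N%:R * (vmax * (vmax `^ (beta - 1) / (N%:R * (vmax `^ (beta - 1) * vmax) / E))) = E.
      by field; rewrite ?gt_eqF ?mulf_neq0 ?gt_eqF.
    by [].
have optb := opt S' s' feas.
have Cb j : 0 <= Cj kind v S' s' j <= rmax + (2 * j + 2)%:R * D.
  apply/andP; split; first exact: bigmax_ge_id.
  apply: bigmax_le.
    by rewrite addr_ge0 // mulr_ge0.
  move=> i hi; have /andP[_ c] := comp i j hi; apply: le_trans c _.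
  rewrite /S' -addrA lerD2l -[X in _ + X]mul1r -mulrDl ler_wpM2r // natr1 ler_nat.
  exact: nat_aux.
have objb : objective kind v w S' s' <= wmax * (n%:R * rmax + n%:R * (n%:R + 1) * D).
  rewrite /objective -sum_lin big_mkord mulr_sumr; apply: ler_sum => j _.
  have /andP[c0 c1] := Cb j; apply: ler_pM => //; exact: ltW.
have obj0 : 0 <= objective kind v w S s.
  by apply: sumr_ge0 => j _; rewrite mulr_ge0 ?(ltW (wpos j)) ?bigmax_ge_id.
have Cjle j : Cj kind v S s j <= objective kind v w S s / wmin.
  rewrite ler_pdivlMr //; apply: le_trans (_ : Cj kind v S s j * w j <= _).
    by rewrite ler_wpM2l ?bigmax_ge_id.
  rewrite mulrC /objective (bigD1 j) //= lerDl.
  by apply: sumr_ge0 => k _; rewrite mulr_ge0 ?(ltW (wpos k)) ?bigmax_ge_id.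
have mk : makespan kind v S s <= objective kind v w S s / wmin.
  by apply: bigmax_le => [|j _]; [exact: divr_ge0 obj0 (ltW wmin0) | exact: Cjle].
apply: le_trans mk _.
rewrite /t_max -/wmax -/wmin -/rmax -/vmax -/N -/Q -/D.
rewrite mulrAC ler_pM2r ?invr_gt0 //; exact: le_trans optb objb.
Qed.
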